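(* Let $N$ be a complex two-step nilpotent Lie algebra whose center has dimension $p$, with $q=\dim N-p$. Then $N$ is decomposable if and only if there is a basis $(X,I)$ of $N$ such that the representation tensor $\mathcal A(X,I)$ is in block diagonal format $(S,T)$ for some nonempty proper subset $S\subset\{1,\dots,q\}$ and some subset $T\subseteq\{1,\dots,p\}$.
   Context: A Lie algebra is decomposable if it is the direct sum of two nonzero ideals. A basis $(X,I)$ of $N$ consists of $I=\{\mathbf y_1,\dots,\mathbf y_p\}$, a basis of the center of $N$, and $X=\{\mathbf x_1,\dots,\mathbf x_q\}$ such that $X\cup I$ is a basis of $N$. Its representation tensor $\mathcal A(X,I)=(a_{ijk})\in\mathbb C^{q\times q\times p}$ is defined by $a_{ijk}=\alpha_k$ where $[\mathbf x_i,\mathbf x_j]=\sum_{s=1}^p\alpha_s\mathbf y_s$. A tensor $\mathcal A\in\mathbb C^{q\times q\times p}$ is in block diagonal format $(S,T)$, with $S\subseteq\{1,\dots,q\}$, $T\subseteq\{1,\dots,p\}$, if its only possibly nonzero entries occur at indices $(i,j,k)\in (S\times S\times T)\cup(S^\complement\times S^\complement\times T^\complement)$.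
   Formalization: The center of N is assumed in addition to coincide with its derived algebra [N,N], besides N being two-step nilpotent. The paper assumes this as well. *)

(* Defs.v *)
From HB Require Import structures.
From mathcomp Require Import all_boot all_order all_algebra.
From mathcomp Require Import complex.
From mathcomp Require Import Rstruct.
Set Implicit Arguments. Unset Strict Implicit. Unset Printing Implicit Defensive.
Import Order.TTheory GRing.Theory Num.Theory.
Local Open Scope ring_scope.

Definition C : fieldType := complex Rdefinitions.R.

Section Lie.
Variable V : vectType C.
Variable br : V -> V -> V.

Definition lie_algebra : Prop :=
  [/\ (forall (a : C) (x y z : V), br (a *: x + y) z = a *: br x z + br y z),
      (forall (a : C) (x y z : V), br z (a *: x + y) = a *: br z x + br z y),
      (forall x : V, br x x = 0) &
      (forall x y z : V, br x (br y z) + br y (br z x) + br z (br x y) = 0)].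

Definition central (v : V) : Prop := forall x : V, br v x = 0.

Definition derived : {vspace V} :=
  (\sum_(i < \dim {:V}) \sum_(j < \dim {:V})
      <[br (vbasis {:V})`_i (vbasis {:V})`_j]>)%VS.

Definition two_step : Prop := forall x y z : V, br (br x y) z = 0.

Definition ideal (A : {vspace V}) : Prop :=
  forall a x : V, a \in A -> br a x \in A.

Definition decomposable : Prop :=
  exists A B : {vspace V},
    [/\ A != 0%VS, B != 0%VS, ideal A /\ ideal B,
        (A + B)%VS = fullv & (A :&: B)%VS = 0%VS].

Definition center_basis (I : seq V) : Prop :=
  free I /\ forall v : V, v \in <<I>>%VS <-> central v.

Definition XI_basis q p (X : q.-tuple V) (I : p.-tuple V) : Prop :=
  center_basis I /\ basis_of fullv (X ++ I).

Definition rep_tensor q p (X : q.-tuple V) (I : p.-tuple V)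
  (i j : 'I_q) (k : 'I_p) : C := coord I k (br (tnth X i) (tnth X j)).

End Lie.

Definition block_diag q p (A : 'I_q -> 'I_q -> 'I_p -> C)
  (S : {set 'I_q}) (T : {set 'I_p}) : Prop :=
  forall i j k, A i j k != 0 ->
    [&& i \in S, j \in S & k \in T] || [&& i \notin S, j \notin S & k \notin T].

(* Main.v *)
Require Import Defs.
From HB Require Import structures.
From mathcomp Require Import zify.
From mathcomp Require Import all_boot all_order all_algebra.
Set Implicit Arguments. Unset Strict Implicit. Unset Printing Implicit Defensive.
Import Order.TTheory GRing.Theory Num.Theory.
Local Open Scope ring_scope.

Section Lie.
Variable V : vectType C.
Variable br : V -> V -> V.
Hypothesis HL : lie_algebra br.

Lemma br0l z : br 0 z = 0.
Proof.
case: HL => H1 _ _ _; have h := H1 1 0 0 z; rewrite !scale1r addr0 in h.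
by apply: (addrI (br 0 z)); rewrite addr0 -h.
Qed.
Lemma br0r z : br z 0 = 0.
Proof.
case: HL => _ H1 _ _; have h := H1 1 0 0 z; rewrite !scale1r addr0 in h.
by apply: (addrI (br z 0)); rewrite addr0 -h.
Qed.
Lemma brDl x y z : br (x + y) z = br x z + br y z.
Proof. by case: HL => H1 _ _ _; have := H1 1 x y z; rewrite !scale1r. Qed.
Lemma brDr x y z : br z (x + y) = br z x + br z y.
Proof. by case: HL => _ H1 _ _; have := H1 1 x y z; rewrite !scale1r. Qed.
Lemma brZl a x z : br (a *: x) z = a *: br x z.
Proof. by case: HL => H1 _ _ _; have := H1 a x 0 z; rewrite !addr0 br0l addr0. Qed.
Lemma brZr a x z : br z (a *: x) = a *: br z x.
Proof. by case: HL => _ H1 _ _; have := H1 a x 0 z; rewrite !addr0 br0r addr0. Qed.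
Lemma brN x y : br x y = - br y x.
Proof.
case: HL => _ _ H3 _; have := H3 (x + y).
rewrite brDl !brDr !H3 add0r addr0 => /eqP; rewrite addr_eq0 => /eqP //.
Qed.
Lemma br_suml I r (P : pred I) (F : I -> V) z :
  br (\sum_(i <- r | P i) F i) z = \sum_(i <- r | P i) br (F i) z.
Proof. exact: (big_morph (fun a => br a z) (fun x y => brDl x y z) (br0l z)). Qed.
Lemma br_sumr I r (P : pred I) (F : I -> V) z :
  br z (\sum_(i <- r | P i) F i) = \sum_(i <- r | P i) br z (F i).
Proof. exact: (big_morph (fun a => br z a) (fun x y => brDr x y z) (br0r z)). Qed.

Hypothesis H2 : two_step br.

Section Rev.
Variables (p q : nat) (X : q.-tuple V) (I : p.-tuple V).
Hypothesis HXI : XI_basis br X I.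

Definition Asp (S : {set 'I_q}) (T : {set 'I_p}) : {vspace V} :=
  (\sum_(i in S) <[tnth X i]> + \sum_(k in T) <[tnth I k]>)%VS.

Lemma X_Asp (S : {set _}) (T : {set _}) i : i \in S -> tnth X i \in Asp S T.
Proof.
move=> Hi; rewrite memvE; apply: subv_trans (addvSl _ _).
exact: (sumv_sup i) Hi (subvv _).
Qed.
Lemma I_Asp (S : {set _}) (T : {set _}) k : k \in T -> tnth I k \in Asp S T.
Proof.
move=> Hi; rewrite memvE; apply: subv_trans (addvSr _ _).
exact: (sumv_sup k) Hi (subvv _).
Qed.

Lemma central_span v x : v \in <<I>>%VS -> br v x = 0.
Proof. by case: HXI => [[_ HI] _] /HI; apply. Qed.

Lemma ideal_Asp (S : {set _}) (T : {set _}) :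
  (forall s j k, s \in S -> rep_tensor br X I s j k != 0 -> k \in T) ->
  ideal br (Asp S T).
Proof.
move=> HST a x /memv_addP [u Hu [w Hw ->]].
rewrite brDl; apply: memvD; last first.
  rewrite central_span ?mem0v //.
  move: w Hw; apply/subvP/subv_sumP => k _; rewrite -memvE.
  by apply: memv_span; apply: mem_tnth.
case/memv_sumP: Hu => vs Hvs ->; rewrite br_suml; apply: memv_suml => i Hi.
have [c ->] := vlineP _ _ (Hvs i Hi); rewrite brZl; apply: memvZ.
have : x \in <<X ++ I>>%VS.
  by case: HXI => _ /span_basis ->; apply: memvf.
rewrite span_cat => /memv_addP [x1 Hx1 [x2 Hx2 ->]].
rewrite brDr [br _ x2]brN (central_span _ Hx2) oppr0 addr0.
rewrite (coord_span Hx1) br_sumr; apply: memv_suml => j _.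
rewrite brZr; apply: memvZ.
have hc : br (tnth X i) X`_j \in <<I>>%VS.
  by case: HXI => [[_ HI] _]; apply/HI => z; apply: H2.
rewrite (coord_span hc); apply: memv_suml => k _.
have [/eqP ->|hne] := boolP (coord I k (br (tnth X i) X`_j) == 0).
  by rewrite scale0r mem0v.
apply: memvZ; rewrite -tnth_nth; apply: I_Asp; apply: (HST i j) => //.
by rewrite /rep_tensor -tnth_nth in hne.
Qed.


Lemma rev_dir (S : {set 'I_q}) (T : {set 'I_p}) :
  S != set0 -> S != setT -> block_diag (rep_tensor br X I) S T ->
  decomposable br.
Proof.
move=> S0 ST HB.
have hbas : basis_of fullv (X ++ I) by case: HXI.
have hfree := basis_free hbas.
have nzX i : tnth X i != 0.
  by apply: (free_not0 hfree); rewrite mem_cat mem_tnth.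
have [s Hs] : exists s, s \notin S.
  case: (pickP (fun s => s \notin S)) => [s Hs|H]; first by exists s.
  exfalso; move/eqP: ST; apply; apply/setP => s; rewrite inE.
  by move: (H s) => /= /negbFE.
have [s0 Hs0] := set0Pn _ S0.
have hAB : (Asp S T + Asp (~: S) (~: T) = fullv)%VS.
  apply/eqP; rewrite eqEsubv subvf /= -(span_basis hbas).
    apply/span_subvP => v; rewrite mem_cat => /orP [] /tnthP [i ->].
      case: (boolP (i \in S)) => Hi.
        by apply: (subvP (addvSl _ _)); apply: X_Asp.
      by apply: (subvP (addvSr _ _)); apply: X_Asp; rewrite inE.
    case: (boolP (i \in T)) => Hi.
      by apply: (subvP (addvSl _ _)); apply: I_Asp.
    by apply: (subvP (addvSr _ _)); apply: I_Asp; rewrite inE.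
exists (Asp S T), (Asp (~: S) (~: T)); split.
- apply/eqP => h; move: (X_Asp T Hs0); rewrite h memv0; apply/negP/nzX.
- apply/eqP => h; have : s \in ~: S by rewrite inE.
  move/(X_Asp (~: T)); rewrite h memv0; apply/negP/nzX.
- split; apply: ideal_Asp => s' j k Hs' Hne; have := HB _ _ _ Hne.
    by case/orP => /and3P [h1 h2 h3] //; rewrite Hs' in h1.
  rewrite inE in Hs' *; case/orP => /and3P [h1 h2 h3] //.
  by rewrite h1 in Hs'.
  by rewrite inE.
- exact: hAB.
- have dimA (S' : {set 'I_q}) (T' : {set 'I_p}) :
      (\dim (Asp S' T') <= #|S'| + #|T'|)%N.
    rewrite /Asp; apply: leq_trans (dimv_add_leqif _ _).1 _.
    apply: leq_add.
      apply: leq_trans (dimv_leq_sum _ _ _) _.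
      rewrite -sum1_card; apply: leq_sum => i _; rewrite dim_vline; exact: leq_b1.
    apply: leq_trans (dimv_leq_sum _ _ _) _.
    rewrite -sum1_card; apply: leq_sum => i _; rewrite dim_vline; exact: leq_b1.
  have hsum := dimv_sum_cap (Asp S T) (Asp (~: S) (~: T)).
  have hfull : \dim (Asp S T + Asp (~: S) (~: T)) = (q + p)%N.
    rewrite hAB -(span_basis hbas); move: hfree; rewrite /free size_cat !size_tuple => /eqP.
    by rewrite addnC.
  have h1 := dimA S T; have h2 := dimA (~: S) (~: T).
  have hc1 := cardsC S; have hc2 := cardsC T.
  rewrite card_ord in hc1; rewrite card_ord in hc2.
  apply/eqP; rewrite -dimv_eq0; apply/eqP; lia.
Qed.

End Rev.

Section Fwd.
Variables (p q : nat) (I0 : p.-tuple V).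
Hypothesis HI0 : center_basis br I0.
Hypothesis Hder : forall v, central br v -> v \in derived br.
Hypothesis Hdim : (q + p)%N = \dim {:V}.

Let Z := <<I0>>%VS.
Lemma memZ v : v \in Z <-> central br v.
Proof. by case: HI0 => _ ->. Qed.

Lemma brZ x y : br x y \in Z.
Proof. by apply/memZ => z; apply: H2. Qed.

Lemma not_central (A B : {vspace V}) :
  A != 0%VS -> ideal br A -> ideal br B -> (A + B = fullv)%VS -> (A :&: B = 0)%VS ->
  ~~ (A <= Z)%VS.
Proof.
move=> A0 IA IB hAB hAB0; apply/negP => AZ.
have brB x y : br x y \in B.
  have : x \in (A + B)%VS by rewrite hAB memvf.
  case/memv_addP => a Ha [b Hb ->]; rewrite brDl.
  have /memZ -> := subvP AZ a Ha; rewrite add0r; exact: IB.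
have dB : (derived br <= B)%VS.
  apply/subv_sumP => i _; apply/subv_sumP => j _; rewrite -memvE; exact: brB.
have AB : (A <= B)%VS.
  apply/subvP => v Hv; apply: (subvP dB); apply: Hder; apply/memZ; exact: subvP AZ v Hv.
by move: A0; rewrite -(capv_idPl AB) hAB0 eqxx.
Qed.

Lemma split_center (A B : {vspace V}) :
  ideal br A -> ideal br B -> (A + B = fullv)%VS -> (A :&: B = 0)%VS ->
  ((A :&: Z) + (B :&: Z) = Z)%VS.
Proof.
move=> IA IB hAB hAB0; apply/eqP; rewrite eqEsubv subv_add !capvSr /=.
apply/subvP => v Hv.
have : v \in (A + B)%VS by rewrite hAB memvf.
case/memv_addP => a Ha [b Hb Hv']; rewrite {1}Hv'; apply: memv_add; rewrite memv_cap ?Ha ?Hb /=.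
  apply/memZ => x; have : br a x \in (A :&: B)%VS.
    rewrite memv_cap IA //=; have -> : a = v - b by rewrite Hv' addrK.
    rewrite [v - b]addrC brDl; move/memZ: Hv => ->; rewrite addr0.
    by rewrite -scaleN1r brZl memvZ // IB.
  by rewrite hAB0 memv0 => /eqP.
apply/memZ => x; have : br b x \in (A :&: B)%VS.
  rewrite memv_cap IB // andbT; have -> : b = v - a by rewrite Hv' addrC addKr.
  rewrite [v - a]addrC brDl; move/memZ: Hv => ->; rewrite addr0.
  by rewrite -scaleN1r brZl memvZ // IA.
by rewrite hAB0 memv0 => /eqP.
Qed.


Lemma fwd_dir : decomposable br ->
  exists (X : q.-tuple V) (I : p.-tuple V) (S : {set 'I_q}) (T : {set 'I_p}),
    [/\ XI_basis br X I, S != set0, S != setT &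
        block_diag (rep_tensor br X I) S T].
Proof.
case=> A [B [A0 B0 [IA IB] hAB hAB0]].
set ZA := (A :&: Z)%VS; set ZB := (B :&: Z)%VS.
set DA := (A :\: Z)%VS; set DB := (B :\: Z)%VS.
have hZ := split_center IA IB hAB hAB0.
have hZAB : (ZA :&: ZB = 0)%VS.
  apply/eqP; rewrite -subv0 -hAB0; apply: capvS; exact: capvSl.
have dZ : \dim Z = p by case: HI0 => /eqnP; rewrite size_tuple.
have dZs : \dim Z = (\dim ZA + \dim ZB)%N by rewrite -hZ dimv_disjoint_sum.
have dV : \dim {:V} = (\dim A + \dim B)%N by rewrite -hAB dimv_disjoint_sum.
have dA : (\dim ZA + \dim DA = \dim A)%N := dimv_cap_compl A Z.
have dB : (\dim ZB + \dim DB = \dim B)%N := dimv_cap_compl B Z.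
have nA : (0 < \dim DA)%N.
  rewrite lt0n dimv_eq0 diffv_eq0; exact: (not_central A0 IA IB hAB hAB0).
have nB : (0 < \dim DB)%N.
  rewrite lt0n dimv_eq0 diffv_eq0; apply: not_central B0 IB IA _ _.
    by rewrite addvC.
  by rewrite capvC.
set sX := vbasis DA ++ vbasis DB; set sI := vbasis ZA ++ vbasis ZB.
have hX : size sX == q by rewrite size_cat !size_tuple; apply/eqP; lia.
have hI : size sI == p by rewrite size_cat !size_tuple; apply/eqP; lia.
pose X := Tuple hX; pose I := Tuple hI.
have bI : basis_of Z I.
  rewrite -hZ; apply: cat_basis; last exact: vbasisP; last exact: vbasisP.
  by apply/directv_addP.
have hXA (i : 'I_q) : (i < \dim DA)%N -> tnth X i \in A.
  move=> hi; rewrite (tnth_nth 0) /= nth_cat size_tuple hi.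
  apply: (subvP (diffvSl A Z)); apply: vbasis_mem; apply: mem_nth.
  by rewrite size_tuple.
have hXB (i : 'I_q) : ~~ (i < \dim DA)%N -> tnth X i \in B.
  move=> hi; rewrite (tnth_nth 0) /= nth_cat size_tuple (negbTE hi).
  apply: (subvP (diffvSl B Z)); apply: vbasis_mem; apply: mem_nth.
  rewrite size_tuple; have := ltn_ord i; lia.
have cA v (k : 'I_p) : v \in ZA -> ~~ (k < \dim ZA)%N -> coord I k v = 0.
  move=> Hv hk; have Hv' : v \in <<vbasis ZA>>%VS by rewrite (span_basis (vbasisP ZA)).
  rewrite (coord_span Hv') linear_sum big1 // => l _; rewrite linearZ /=.
  have hl : (l < p)%N by have := ltn_ord l; lia.
  have -> : (vbasis ZA)`_l = I`_(Ordinal hl) by rewrite /= nth_cat size_tuple ltn_ord.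
  rewrite coord_free; last exact: basis_free bI.
  case: eqP => [h|_]; last by rewrite mulr0.
  by move: hk; rewrite -h /= ltn_ord.
have cB v (k : 'I_p) : v \in ZB -> (k < \dim ZA)%N -> coord I k v = 0.
  move=> Hv hk; have Hv' : v \in <<vbasis ZB>>%VS by rewrite (span_basis (vbasisP ZB)).
  rewrite (coord_span Hv') linear_sum big1 // => l _; rewrite linearZ /=.
  have hl : (\dim ZA + l < p)%N by have := ltn_ord l; lia.
  have -> : (vbasis ZB)`_l = I`_(Ordinal hl).
    by rewrite /= nth_cat size_tuple ltnNge leq_addr /= addKn.
  rewrite coord_free; last exact: basis_free bI.
  case: eqP => [h|_]; last by rewrite mulr0.
  by move: hk; rewrite -h /= ltnNge leq_addr.
have h0q : (0 < q)%N by lia.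
have hq : (\dim DA < q)%N by lia.
exists X, I, [set i : 'I_q | (i < \dim DA)%N], [set k : 'I_p | (k < \dim ZA)%N]; split.
- split.
    split; first exact: basis_free bI.
    by move=> v; rewrite (span_basis bI); exact: memZ.
  rewrite basisEdim; apply/andP; split; last by rewrite size_cat !size_tuple Hdim.
  rewrite span_cat /= !span_cat !(span_basis (vbasisP _)).
  rewrite -hAB -{1}(addv_diff_cap A Z) -{1}(addv_diff_cap B Z) -/DA -/DB -/ZA -/ZB.
  rewrite !subv_add; do !(apply/andP; split);
    first [ by apply: subv_trans (addvSl _ _); apply: addvSl
          | by apply: subv_trans (addvSr _ _); apply: addvSl
          | by apply: subv_trans (addvSl _ _); apply: addvSr
          | by apply: subv_trans (addvSr _ _); apply: addvSr ].
- by apply/set0Pn; exists (Ordinal h0q); rewrite inE.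
- by apply/eqP => hS; have := in_setT (Ordinal hq); rewrite -hS inE ltnn.
- move=> i j k; rewrite /rep_tensor => hne.
  case: (boolP (i < \dim DA)%N) => hi; case: (boolP (j < \dim DA)%N) => hj.
  + have hv : br (tnth X i) (tnth X j) \in ZA by rewrite memv_cap IA ?brZ // hXA.
    case hk : (k < \dim ZA)%N; first by rewrite !inE hi hj hk.
    by move: hne; rewrite cA ?hk ?eqxx.
  + have : br (tnth X i) (tnth X j) \in (A :&: B)%VS.
      by rewrite memv_cap IA ?hXA // brN memvN IB ?hXB.
    by rewrite hAB0 memv0 => /eqP h; rewrite h linear0 eqxx in hne.
  + have : br (tnth X i) (tnth X j) \in (A :&: B)%VS.
      by rewrite memv_cap IB ?hXB // brN memvN IA ?hXA.
    by rewrite hAB0 memv0 => /eqP h; rewrite h linear0 eqxx in hne.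
  + have hv : br (tnth X i) (tnth X j) \in ZB by rewrite memv_cap IB ?brZ // hXB.
    case hk : (k < \dim ZA)%N; first by move: hne; rewrite cB ?hk ?eqxx.
    by rewrite !inE (negbTE hi) (negbTE hj) hk.
Qed.

End Fwd.

End Lie.

Unset Implicit Arguments.

Theorem lemma4 (V : vectType C) (br : V -> V -> V) (p q : nat) :
  lie_algebra br ->
  two_step br ->
  (forall v : V, central br v <-> v \in derived br) ->
  (exists I : p.-tuple V, center_basis br I) ->
  (q + p)%N = \dim {:V} ->
  decomposable br <->
  exists (X : q.-tuple V) (I : p.-tuple V) (S : {set 'I_q}) (T : {set 'I_p}),
    [/\ XI_basis br X I, S != set0, S != setT &
        block_diag (rep_tensor br X I) S T].
Proof.
move=> HL H2 Hc [I0 HI0] Hdim; split.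
- exact: (fwd_dir HL H2 HI0 (fun v h => proj1 (Hc v) h) Hdim).
- case=> X [I [S [T [HXI S0 ST HB]]]]; exact: (rev_dir HL H2 HXI S0 ST HB).
Qed.
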